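(* Let $G$ be an abelian group, $\underline{g}=(g_1,\dots,g_m)\in G^m$, and $\tilde{\underline{g}}=(g_1,\dots,g_m,g_m)\in G^{m+1}$. Let $S=\mathcal{B}(\underline{g})$ with the grading $S_d=\{\alpha\in\mathcal{B}(\underline{g})\mid\alpha_m=d\}$. Then $\mathcal{B}(\tilde{\underline{g}})\cong\tilde S$ as monoids.
   Context: $G$ is written multiplicatively. For $\underline{h}=(h_1,\dots,h_k)\in G^k$, $\mathcal{B}(\underline{h})=\{\alpha\in\mathbb{N}_0^k\mid\prod_i h_i^{\alpha_i}=1\}$, a submonoid of the additive monoid $\mathbb{N}_0^k$. For a graded monoid $S=\bigsqcup_d S_d$ (with $S_dS_e\subseteq S_{d+e}$, $|s|=d$ for $s\in S_d$), $\tilde S=\{s[i]\mid s\in S,\ 0\le i\le|s|\}$ with operation $s[i]\cdot t[j]=(s\cdot t)[i+j]$. *)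

(* Defs.v *)
From HB Require Import structures.
From mathcomp Require Import all_boot all_algebra.
Set Implicit Arguments. Unset Strict Implicit. Unset Printing Implicit Defensive.
Import GRing.Theory.
Local Open Scope ring_scope.

(* An abelian group G is rendered as a zmodType (written additively):
   prod_i h_i^{alpha_i} = 1 becomes sum_i alpha_i . h_i = 0. *)

Notation vecN k := {ffun 'I_k -> nat}.
Definition vaddN k (a b : vecN k) : vecN k := [ffun i => (a i + b i)%N].
Definition vzeroN k : vecN k := [ffun => 0%N].

Definition Bmon (G : zmodType) k (h : 'I_k -> G) : pred (vecN k) :=
  fun a => \sum_(i < k) h i *+ a i == 0.

(* tilde g = (g_1, ..., g_m, g_m) for g = (g_1,...,g_m), m = n.+1 *)
Definition dup_last (G : Type) n (g : 'I_n.+1 -> G) : 'I_n.+2 -> G :=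
  fun i => g (inord (minn i n)).

(* tilde S for a graded submonoid S (carrier predicate, operation, degree):
   pairs (s, i) with s in S and 0 <= i <= |s|, with
   (s,i)*(t,j) = (s*t, i+j) and unit (1, 0). *)
Definition tilde_carrier T (S : pred T) (deg : T -> nat) : pred (T * nat) :=
  fun p => (p.1 \in S) && (p.2 <= deg p.1)%N.
Definition tilde_op T (op : T -> T -> T) (p q : T * nat) : T * nat :=
  (op p.1 q.1, (p.2 + q.2)%N).
Definition tilde_unit T (e : T) : T * nat := (e, 0%N).

Definition is_monoid_iso T U (A : pred T) (opA : T -> T -> T) (eA : T)
  (B : pred U) (opB : U -> U -> U) (eB : U) (f : T -> U) : Prop :=
  [/\ {in A, forall x, f x \in B},
      {in A &, injective f},
      (forall y, y \in B -> exists2 x, x \in A & f x = y),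
      f eA = eB &
      {in A &, forall x y, f (opA x y) = opB (f x) (f y)}].

Definition monoid_isomorphic T U (A : pred T) (opA : T -> T -> T) (eA : T)
  (B : pred U) (opB : U -> U -> U) (eB : U) : Prop :=
  exists f : T -> U, is_monoid_iso A opA eA B opB eB f.

(* Main.v *)
Require Import Defs.
From mathcomp Require Import all_boot all_algebra.
From mathcomp Require Import zify.
Set Implicit Arguments. Unset Strict Implicit. Unset Printing Implicit Defensive.
Import GRing.Theory.

Section S.
Variables (G : zmodType) (n : nat) (g : 'I_n.+1 -> G).

Definition fmap (a : vecN n.+2) : vecN n.+1 * nat :=
  ([ffun i : 'I_n.+1 => if (i : nat) == n then (a (inord n) + a ord_max)%N
                         else a (inord i)], a ord_max).

Definition finv (p : vecN n.+1 * nat) : vecN n.+2 :=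
  [ffun j : 'I_n.+2 => if (j : nat) == n.+1 then p.2
     else if (j : nat) == n then (p.1 ord_max - p.2)%N else p.1 (inord j)].

Local Open Scope ring_scope.
Lemma sum_eq (a : vecN n.+2) :
  (\sum_(i < n.+2) dup_last g i *+ a i = \sum_(i < n.+1) g i *+ (fmap a).1 i)%R.
Proof.
rewrite big_ord_recr big_ord_recr /= [in RHS]big_ord_recr /= -addrA.
congr (_ + _)%R.
  apply: eq_bigr => i _; rewrite ffunE /dup_last /=.
  have -> : ((widen_ord (leqnSn n) i : nat) == n) = false by rewrite /= ltn_eqF.
  have -> : minn i n = i by apply/minn_idPl; apply: ltnW.
  by congr (g _ *+ a _); apply: val_inj; rewrite /= inordK //; have := ltn_ord i; lia.
rewrite /fmap /= ffunE /= eqxx mulrnDr /dup_last /=.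
have -> : minn n n = n by rewrite minnn.
have -> : minn n.+1 n = n by apply/minn_idPr.
have -> : (inord n : 'I_n.+1) = ord_max by apply: val_inj; rewrite /= inordK.
congr (_ *+ a _ + _)%R; apply: val_inj; rewrite /= inordK //.
Qed.

Lemma Bmon_eq (a : vecN n.+2) : Bmon (dup_last g) a = Bmon g (fmap a).1.
Proof. by rewrite /Bmon sum_eq. Qed.

End S.

Theorem proposition4p6 (G : zmodType) (n : nat) (g : 'I_n.+1 -> G) :
  monoid_isomorphic
    (Bmon (dup_last g)) (@vaddN n.+2) (vzeroN n.+2)
    (tilde_carrier (Bmon g) (fun a : vecN n.+1 => a ord_max))
    (tilde_op (@vaddN n.+1)) (tilde_unit (vzeroN n.+1)).
Proof.
exists (@fmap n); split.
- move=> a Ha; rewrite /in_mem /= /tilde_carrier; apply/andP; split.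
    by move: Ha; rewrite /in_mem /= Bmon_eq.
  by rewrite /fmap /= ffunE eqxx leq_addl.
- move=> x y _ _ [E1 E2]; apply/ffunP => j.
  have e := congr1 (fun f : vecN n.+1 => f ord_max) E1.
  have ei := fun i : 'I_n.+1 => congr1 (fun f : vecN n.+1 => f i) E1.
  move: e; rewrite /= !ffunE /= eqxx E2 => /addIn e.
  case: (ltngtP j n) => hj.
  + have := ei (inord j); rewrite /= !ffunE /= inordK; last lia.
    rewrite ltn_eqF //.
    have -> : (inord j : 'I_n.+2) = j by apply: val_inj; rewrite /= inordK; lia.
    done.
  + have -> : j = ord_max by apply: val_inj => /=; have := ltn_ord j; lia.
    done.
  + have -> : j = inord n by apply: val_inj; rewrite /= inordK.
    done.
- move=> [b i]; rewrite /in_mem /= /tilde_carrier /= => /andP [Hb Hi].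
  have Ef : fmap (finv (b, i)) = (b, i).
    rewrite /fmap /finv /=; congr pair; last by rewrite ffunE /= eqxx.
    apply/ffunP => k; rewrite !ffunE /= inordK // (ltn_eqF (ltnSn n)) eqxx.
    case: eqP => hk.
      rewrite eqxx subnK //.
      by have -> : k = ord_max by apply: val_inj.
    rewrite inordK; last by have := ltn_ord k; lia.
    have -> : ((k : nat) == n.+1) = false by have := ltn_ord k; lia.
    rewrite (introF eqP hk); congr (b _); apply: val_inj; rewrite /= inordK //.
  exists (finv (b, i)) => //.
  by rewrite /in_mem /= Bmon_eq Ef.
- rewrite /fmap /tilde_unit /vzeroN; congr pair; last by rewrite ffunE.
  by apply/ffunP => k; rewrite !ffunE; case: ifP.
- move=> x y _ _; rewrite /fmap /tilde_op /vaddN /=; congr pair; last by rewrite ffunE.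
  apply/ffunP => k; rewrite !ffunE; case: ifP => _; rewrite ?ffunE //; lia.
Qed.
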